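(* Let $f(x) = a_3x^3 + a_2x^2 + a_1x + a_0$ be a real polynomial with $a_3 > 0$ and $a_2^2 - 3a_1a_3 \geq 0$. Consider the condition $(\dagger)$: $\frac{-2a_2^3 + 9a_1a_2a_3 - 2(a_2^2 - 3a_1a_3)^{3/2}}{27a_3^2} \leq a_0 \leq \frac{-2a_2^3 + 9a_1a_2a_3 + 2(a_2^2 - 3a_1a_3)^{3/2}}{27a_3^2}$. Then: (1) all complex roots of $f(x)$ are real and non-negative if and only if $a_2 \leq 0$, $0 \leq a_1 \leq \frac{a_2^2}{3a_3}$, $a_0 \leq 0$ and $(\dagger)$ holds; (2) all complex roots of $f(x)$ are real and positive if and only if $a_2 < 0$, $0 < a_1 \leq \frac{a_2^2}{3a_3}$, $a_0 < 0$ and $(\dagger)$ holds.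
   Context: For a non-negative real $r$, $r^{3/2}$ denotes the non-negative real number $(\sqrt{r})^3$. *)

(* Defs.v *)
(* R is a real closed field (e.g. the reals); complex R = R[i]
   is its algebraic closure (mathcomp-real-closed). *)
From mathcomp Require Import all_boot all_order all_algebra.
From mathcomp Require Export complex.
Set Implicit Arguments. Unset Strict Implicit. Unset Printing Implicit Defensive.
Import Order.TTheory GRing.Theory Num.Theory.
Local Open Scope ring_scope.

Definition cubic (R : nzRingType) (a3 a2 a1 a0 : R) : {poly R} :=
  a3 *: 'X^3 + a2 *: 'X^2 + a1 *: 'X + a0%:P.

Definition pow32 (R : rcfType) (r : R) : R := (Num.sqrt r) ^+ 3.

Definition dagger (R : rcfType) (a3 a2 a1 a0 : R) : Prop :=
  (- 2 * a2 ^+ 3 + 9 * a1 * a2 * a3 - 2 * pow32 (a2 ^+ 2 - 3 * a1 * a3))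
      / (27 * a3 ^+ 2) <= a0 /\
  a0 <= (- 2 * a2 ^+ 3 + 9 * a1 * a2 * a3 + 2 * pow32 (a2 ^+ 2 - 3 * a1 * a3))
      / (27 * a3 ^+ 2).

Definition all_roots_real_and (R : rcfType) (p : {poly R}) (P : R -> bool) : Prop :=
  forall z : R[i], root (map_poly (real_complex R) p) z ->
    complex.Im z = 0 /\ P (complex.Re z).

(* Main.v *)
Require Import Defs.
From mathcomp Require Import all_boot all_order all_algebra.
From mathcomp Require Import complex.
From mathcomp.algebra_tactics Require Import ring lra.
Import Order.TTheory GRing.Theory Num.Theory.
Local Open Scope ring_scope.

Set Implicit Arguments. Unset Strict Implicit.
Section Aux.
Variable R : rcfType.
Local Open Scope complex_scope.
Lemma cmul (a b c d : R) : (a +i* b) * (c +i* d) = (a*c - b*d) +i* (a*d + b*c).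
Proof. by []. Qed.
Lemma cadd (a b c d : R) : (a +i* b) + (c +i* d) = (a+c) +i* (b+d).
Proof. by []. Qed.
Lemma creal (a : R) : a%:C = a +i* 0.
Proof. by []. Qed.
Lemma cone : (1 : R[i]) = 1 +i* 0.
Proof. by []. Qed.
Lemma czero : (0 : R[i]) = 0 +i* 0.
Proof. by []. Qed.

Variables a3 a2 a1 a0 : R.
Definition Fc := map_poly (real_complex R) (cubic a3 a2 a1 a0).

Lemma hornerFc z : Fc.[z] = a3%:C * z^+3 + a2%:C*z^+2 + a1%:C*z + a0%:C.
Proof.
rewrite /Fc /cubic !rmorphD /= !map_polyZ /= !map_polyXn map_polyX map_polyC /=.
by rewrite !hornerD !hornerZ !hornerXn hornerX hornerC.
Qed.

Lemma Fc_comp u v : Fc.[u +i* v] =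
  (a3*(u^+3-3*u*v^+2)+a2*(u^+2-v^+2)+a1*u+a0) +i* (v*(a3*(3*u^+2-v^+2)+2*a2*u+a1)).
Proof.
rewrite hornerFc !exprS !expr0 cone !creal !cmul !cadd.
congr Complex; ring.
Qed.

Lemma rootFc u v : root Fc (u +i* v) <->
  (a3*(u^+3-3*u*v^+2)+a2*(u^+2-v^+2)+a1*u+a0 = 0 /\ v*(a3*(3*u^+2-v^+2)+2*a2*u+a1) = 0).
Proof.
rewrite /root Fc_comp czero; split.
  by move/eqP => [-> ->].
by case=> -> ->.
Qed.
Definition fr x := a3*x^+3 + a2*x^+2 + a1*x + a0.
Lemma rootFc_real x : root Fc (x +i* 0) <-> fr x = 0.
Proof.
rewrite rootFc /fr; split.
  by case=> h _; rewrite -[RHS]h; ring.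
move=> h; split; last by rewrite mul0r.
by rewrite -[RHS]h; ring.
Qed.

Definition Dq := a2^+2 - 3*a1*a3.
Definition D1 := 27*a3^+2*a0 + 2*a2^+3 - 9*a1*a2*a3.
Definition Disc := 4*Dq^+3 - D1^+2.

Lemma dagger_iff : 0 < a3 -> 0 <= Dq -> dagger a3 a2 a1 a0 <-> 0 <= Disc.
Proof.
move=> ha3 hD.
have hS : 0 <= pow32 Dq by rewrite /pow32 exprn_ge0 // sqrtr_ge0.
have hS2 : pow32 Dq ^+ 2 = Dq ^+ 3.
  by rewrite /pow32 -exprM mulnC exprM sqr_sqrtr.
have h27 : 0 < 27 * a3^+2 by rewrite mulr_gt0 // exprn_gt0.
rewrite /dagger /Disc /Dq /D1 in hS hS2 *.
rewrite !ler_pdivrMr // !ler_pdivlMr //.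
set S := pow32 _ in hS hS2 *.
split.
  case=> h1 h2.
  rewrite -hS2; nra.
rewrite -hS2 => h.
split; nra.
Qed.
Lemma roots_real z : 0 < a3 -> 0 <= Disc -> root Fc z -> complex.Im z = 0.
Proof.
move=> ha3 hD; case: z => u v /= /rootFc [hP hQ].
case: (boolP (v == 0)) => [/eqP -> // | hv].
move: hQ => /eqP; rewrite mulf_eq0 (negbTE hv) /= => /eqP hQ.
have ha1 : a1 = - a3*(3*u^+2-v^+2) - 2*a2*u.
  by rewrite -[a1]subr0 -{1}hQ; ring.
have ha0 : a0 = - (a3*(u^+3-3*u*v^+2)+a2*(u^+2-v^+2)+a1*u).
  by rewrite -[a0]subr0 -{1}hP; ring.
have E : Disc = -108 * a3^+2 * v^+2 * ((a2+3*a3*u)^+2 + a3^+2*v^+2)^+2.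
  by rewrite /Disc /Dq /D1 ha0 ha1; ring.
have sq_pos (x : R) : x != 0 -> 0 < x^+2.
  by move=> hx; rewrite lt0r sqr_ge0 sqrf_eq0 hx.
have h1 : 0 < a3^+2 * v^+2 by rewrite mulr_gt0 // sq_pos // gt_eqF.
have h2 : 0 < (a2+3*a3*u)^+2 + a3^+2*v^+2.
  by apply: ltr_wpDl; [exact: sqr_ge0 | exact: h1].
have hpos : 0 < ((a2+3*a3*u)^+2 + a3^+2*v^+2)^+2 * (a3^+2 * v^+2).
  by rewrite mulr_gt0 // sq_pos // gt_eqF.
move: hD; rewrite E; nra.
Qed.
Lemma Fc_size : 0 < a3 -> size Fc != 1%N.
Proof.
move=> ha3; apply/negP => /eqP hs.
have hp := size1_polyC (eq_leq hs).
have E x : complex.Re (Fc.[x +i* 0]) = complex.Re (Fc`_0).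
  by rewrite {1}hp hornerC.
have e0 := E 0; have e1 := E 1; have e2 := E (-1); have e3 := E 2.
rewrite Fc_comp /= in e0; rewrite Fc_comp /= in e1; rewrite Fc_comp /= in e2; rewrite Fc_comp /= in e3.
have : a3 = 0.
  have h : 6 * a3 = 0 by lra.
  by move/eqP: h; rewrite mulf_eq0 => /orP[|/eqP //]; rewrite pnatr_eq0.
by move=> h; rewrite h ltxx in ha3.
Qed.
Lemma three_roots (P : pred R) : 0 < a3 ->
  all_roots_real_and (cubic a3 a2 a1 a0) P ->
  exists r s t, [/\ P r, P s, P t &
     [/\ a2 = -a3*(r+s+t), a1 = a3*(r*s+s*t+r*t) & a0 = -a3*(r*s*t)]].
Proof.
move=> ha3 H.
have a3n0 : a3 != 0 by rewrite gt_eqF.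
have [z hz] : exists z, root Fc z by apply/closed_rootP; apply: Fc_size.
have [hIm hPz] := H z hz.
set r := complex.Re z in hPz.
have hz' : z = r +i* 0 by rewrite /r -hIm; case: (z).
rewrite hz' in hz; move/rootFc_real: hz; rewrite /fr => hr.
set b := a2 + a3 * r.
set c := a1 + b * r.
have ha0 : a0 = - (c * r).
  by rewrite -[a0]subr0 -{1}hr /c /b; ring.
have ha2 : a2 = b - a3 * r by rewrite /b; ring.
have ha1 : a1 = c - b * r by rewrite /c; ring.
have fact x : fr x = (x - r) * (a3 * x^+2 + b * x + c).
  by rewrite /fr ha0 ha1 ha2; ring.
set disc := b^+2 - 4 * a3 * c.
case: (ltrP disc 0) => hdisc.
  exfalso.
  set q := Num.sqrt (- disc).
  have hq : 0 < q by rewrite sqrtr_gt0 oppr_gt0.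
  have hq2 : q ^+ 2 = - disc by rewrite sqr_sqrtr // oppr_ge0 ltW.
  set u := - b / (2 * a3).
  set v := q / (2 * a3).
  have hA : a3 * (u^+2 - v^+2) + b * u + c = 0.
    have e : (a3 * (u^+2 - v^+2) + b * u + c) * (4 * a3) = - disc - q^+2.
      by rewrite /u /v /disc; field.
    move: e; rewrite hq2 subrr => /eqP; rewrite mulf_eq0 => /orP[/eqP //|].
    by rewrite mulf_eq0 (negbTE a3n0) orbF pnatr_eq0.
  have hB : 2 * a3 * u + b = 0 by rewrite /u; field.
  have : root Fc (u +i* v).
    apply/rootFc; split.
      have -> : a3 * (u ^+ 3 - 3 * u * v ^+ 2) + a2 * (u ^+ 2 - v ^+ 2) + a1 * u + a0
          = (u - r) * (a3 * (u^+2 - v^+2) + b * u + c) - v * (v * (2 * a3 * u + b)).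
        by rewrite ha0 ha1 ha2; ring.
      by rewrite hA hB !mulr0 subrr.
    have -> : v * (a3 * (3 * u ^+ 2 - v ^+ 2) + 2 * a2 * u + a1)
          = v * (a3 * (u^+2 - v^+2) + b * u + c) + (u - r) * (v * (2 * a3 * u + b)).
      by rewrite ha1 ha2; ring.
    by rewrite hA hB !mulr0 addr0.
  move=> /H [/= hv _].
  move: hv; rewrite /v => /eqP; rewrite mulf_eq0 invr_eq0 mulf_eq0 (negbTE a3n0) orbF.
  by rewrite pnatr_eq0 orbF (gt_eqF hq).
set q := Num.sqrt disc.
have hq2 : q ^+ 2 = disc by rewrite sqr_sqrtr.
set s := (- b + q) / (2 * a3).
set t := (- b - q) / (2 * a3).
have quad0 w : (a3 * w^+2 + b * w + c) * (4 * a3) = (2 * a3 * w + b)^+2 - disc.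
  by rewrite /disc; ring.
have root_of w : (2 * a3 * w + b)^+2 = disc -> P w.
  move=> hw.
  have hf : fr w = 0.
    rewrite fact; apply/eqP; rewrite mulf_eq0; apply/orP; right.
    have := quad0 w; rewrite hw subrr => /eqP; rewrite mulf_eq0 => /orP[//|].
    by rewrite mulf_eq0 (negbTE a3n0) orbF pnatr_eq0.
  by have [_ ] := H _ (proj2 (rootFc_real w) hf).
have hs : P s.
  by apply: root_of; rewrite -hq2 /s; congr (_ ^+ 2); field.
have ht : P t.
  by apply: root_of; rewrite -hq2 /t -sqrrN; congr (_ ^+ 2); field.
have hb : b = - a3 * (s + t) by rewrite /s /t; field.
have hc : c = a3 * (s * t).
  have e : a3 * (s * t) = (b^+2 - q^+2) / (4 * a3) by rewrite /s /t; field.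
  by rewrite e hq2 /disc; field.
exists r, s, t; split => //; split.
- by rewrite ha2 hb; ring.
- by rewrite ha1 hc hb; ring.
- by rewrite ha0 hc; ring.
Qed.
Lemma Disc_roots r s t : a2 = -a3*(r+s+t) -> a1 = a3*(r*s+s*t+r*t) -> a0 = -a3*(r*s*t) ->
  0 <= Disc.
Proof.
move=> h2 h1 h0.
have -> : Disc = 27 * (a3^+3 * ((r-s)*(s-t)*(r-t)))^+2.
  by rewrite /Disc /Dq /D1 h0 h1 h2; ring.
by rewrite mulr_ge0 // sqr_ge0.
Qed.

Lemma backward (P : pred R) : 0 < a3 -> 0 <= Disc ->
  (forall x, fr x = 0 -> P x) -> all_roots_real_and (cubic a3 a2 a1 a0) P.
Proof.
move=> ha3 hD hP z hz.
have hIm := @roots_real z ha3 hD hz.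
split => //.
apply: hP; apply/rootFc_real.
by rewrite -hIm; case: (z) hz.
Qed.
End Aux.
Unset Implicit Arguments.

Theorem proposition3p2 (R : rcfType) (a3 a2 a1 a0 : R) :
  0 < a3 -> 0 <= a2 ^+ 2 - 3 * a1 * a3 ->
  (all_roots_real_and (cubic a3 a2 a1 a0) (fun x => 0 <= x) <->
     [/\ a2 <= 0, 0 <= a1 /\ a1 <= a2 ^+ 2 / (3 * a3), a0 <= 0
       & dagger a3 a2 a1 a0]) /\
  (all_roots_real_and (cubic a3 a2 a1 a0) (fun x => 0 < x) <->
     [/\ a2 < 0, 0 < a1 /\ a1 <= a2 ^+ 2 / (3 * a3), a0 < 0
       & dagger a3 a2 a1 a0]).
Proof.
move=> ha3 hD.
have hDq : 0 <= Dq a3 a2 a1 by [].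
have hle : a1 <= a2 ^+ 2 / (3 * a3).
  rewrite ler_pdivlMr ?mulr_gt0 // -subr_ge0.
  by rewrite (_ : a2^+2 - a1*(3*a3) = a2^+2 - 3*a1*a3) //; ring.
split; split.
- move=> H.
  have [r [s [t [hr hs ht [h2 h1 h0]]]]] := three_roots ha3 H.
  split => //.
  + rewrite h2 mulNr oppr_le0; apply: mulr_ge0; [exact: ltW | by rewrite !addr_ge0].
  + split => //; rewrite h1; apply: mulr_ge0; [exact: ltW | ].
    by rewrite !addr_ge0 // mulr_ge0.
  + rewrite h0 mulNr oppr_le0; apply: mulr_ge0; [exact: ltW | by rewrite !mulr_ge0].
  + by apply/dagger_iff => //; exact: (Disc_roots h2 h1 h0).
- case=> h2 [h1 _] h0 hdag.
  apply: backward => //; first by apply/dagger_iff.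
  move=> x hx; rewrite leNgt; apply/negP => hx0.
  move: hx; rewrite /fr.
  have : a3 * x ^+ 3 < 0.
    by rewrite pmulr_rlt0 // exprS pmulr_llt0 // exprn_even_gt0 //= ?lt_eqF.
  have : a2 * x^+2 <= 0 by rewrite mulr_le0_ge0 // sqr_ge0.
  have : a1 * x <= 0 by rewrite mulr_ge0_le0 // ltW.
  move=> *; lra.
- move=> H.
  have [r [s [t [hr hs ht [h2 h1 h0]]]]] := three_roots ha3 H.
  split => //.
  + by rewrite h2 mulNr oppr_lt0 mulr_gt0 // !addr_gt0.
  + split => //; rewrite h1; apply: mulr_gt0 => //.
    by rewrite !addr_gt0 // mulr_gt0.
  + rewrite h0; rewrite mulNr oppr_lt0; apply: mulr_gt0 => //; apply: mulr_gt0 => //.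
    exact: mulr_gt0.
  + by apply/dagger_iff => //; exact: (Disc_roots h2 h1 h0).
- case=> h2 [h1 _] h0 hdag.
  apply: backward => //; first by apply/dagger_iff.
  move=> x hx; rewrite ltNge; apply/negP => hx0.
  move: hx; rewrite /fr.
  have : a3 * x ^+ 3 <= 0.
    by rewrite pmulr_rle0 // exprS; apply: mulr_le0_ge0 => //; exact: sqr_ge0.
  have : a2 * x^+2 <= 0 by apply: mulr_le0_ge0; [exact: ltW | exact: sqr_ge0].
  have : a1 * x <= 0 by rewrite mulr_ge0_le0 // ltW.
  move=> *; lra.
Qed.
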